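(* Consider the reliable facility location problem described in the context, and define the decision-dependent set $\mathcal U^k(x)=\{u\in\mathbb R^{|I|}_+: \sum_{j\in J}u_j\le k,\ u_j\le x_{d,j}\ \forall j\in J,\ u_i=0\ \forall i\notin J\}$. If $C\ge\max_{i,j}c_{ij}$ and $\theta_i\le 0$ for all $i\in I$, then the problem $\min_{(x_c,x_d)\in\mathcal X}(1-\rho)\sum_{i\in I}\sum_{j\in J}c_{ij}x_{c,ij}+\rho\max_{u\in\mathcal U^0}\min_{(y_1,y_2)\in\mathcal Y(x,u)}\Big(\sum_{i\in I}\sum_{j\in J}c_{ij}y_{1,ij}+\sum_{i\in I}Cy_{2,i}\Big)$ is equivalent to the same problem with $\mathcal U^0$ replaced by $\mathcal U^k(x)$; in particular the two optimal values coincide.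
   Context: $I$ is a finite set of client sites and $J\subseteq I$ the set of potential facility sites; $d_i\ge 0$ is the demand at $i$; $c_{ij}\ge 0$ is the unit cost of serving $i$ from $j$, with $c_{ii}=0$; $A_j$ is the capacity of site $j$; $p$ and $k$ are positive integers; $\rho\in[0,1]$; $C$ is the unit penalty for unmet demand; $\theta_i$ is a demand-change parameter. First stage: $\mathcal X=\{(x_c,x_d)\in\mathbb R^{|I|\times|J|}_+\times\{0,1\}^{|J|}: \sum_{j\in J}x_{d,j}=p,\ \sum_{j\in J}x_{c,ij}\ge d_i\ \forall i\in I,\ \sum_{i\in I}x_{c,ij}\le A_jx_{d,j}\ \forall j\in J\}$. Uncertainty (disruptions): $\mathcal U^0=\{u\in\{0,1\}^{|I|}: \sum_{i\in I}u_i\le k\}$. Recourse: $\mathcal Y(x,u)=\{(y_1,y_2)\in\mathbb R^{|I||J|}_+\times\mathbb R^{|I|}_+: \sum_{j\in J}y_{1,ij}+y_{2,i}\ge(1+\theta_iu_i)d_i\ \forall i\in I,\ \sum_{i\in I}y_{1,ij}\le A_jx_{d,j}\ \forall j\in J,\ \sum_{i\in I}y_{1,ij}\le A_j(1-u_j)\ \forall j\in J\}$. Two formulations are called equivalent if they have the same optimal value and any optimal first-stage solution of one is optimal for the other, and vice versa. *)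

(* Defs.v *)
From HB Require Import structures.
From mathcomp Require Import all_boot all_order all_algebra.
From mathcomp Require Import all_classical all_reals ereal.
Set Implicit Arguments. Unset Strict Implicit. Unset Printing Implicit Defensive.
Import Order.TTheory GRing.Theory Num.Theory.
Local Open Scope classical_set_scope.
Local Open Scope ring_scope.

(* Potential facility sites: finite type J,
   embedded in I by an injective map emb (J is a subset of I).
   First-stage decision x = (x_c, x_d) with x_c : I -> J -> R, x_d : J -> R. *)

Section RFL.
Variables (R : realType) (I J : finType) (emb : J -> I).

Definition Xset (A : J -> R) (d : I -> R) (p : nat)
  : set ((I -> J -> R) * (J -> R)) :=
  [set x | (forall i j, 0 <= x.1 i j)
        /\ (forall j, x.2 j = 0 \/ x.2 j = 1)
        /\ \sum_(j : J) x.2 j = p%:R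
        /\ (forall i, d i <= \sum_(j : J) x.1 i j)
        /\ (forall j, \sum_(i : I) x.1 i j <= A j * x.2 j)].

Definition U0set (k : nat) : set (I -> R) :=
  [set u | (forall i, u i = 0 \/ u i = 1) /\ \sum_(i : I) u i <= k%:R].

Definition Ukset (k : nat) (xd : J -> R) : set (I -> R) :=
  [set u | (forall i, 0 <= u i)
        /\ \sum_(j : J) u (emb j) <= k%:R
        /\ (forall j, u (emb j) <= xd j)
        /\ (forall i, (forall j, emb j <> i) -> u i = 0)].

Definition Yset (A : J -> R) (d theta : I -> R) (xd : J -> R) (u : I -> R)
  : set ((I -> J -> R) * (I -> R)) :=
  [set y | (forall i j, 0 <= y.1 i j) /\ (forall i, 0 <= y.2 i)
        /\ (forall i, (1 + theta i * u i) * d i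
                      <= \sum_(j : J) y.1 i j + y.2 i)
        /\ (forall j, \sum_(i : I) y.1 i j <= A j * xd j)
        /\ (forall j, \sum_(i : I) y.1 i j <= A j * (1 - u (emb j)))].

Definition recourse_cost (c : I -> J -> R) (C : R)
  (y : (I -> J -> R) * (I -> R)) : R :=
  \sum_(i : I) \sum_(j : J) c i j * y.1 i j + \sum_(i : I) C * y.2 i.

Definition worst_case (U : (I -> J -> R) * (J -> R) -> set (I -> R))
  (A : J -> R) (d theta : I -> R) (c : I -> J -> R) (C : R)
  (x : (I -> J -> R) * (J -> R)) : \bar R :=
  ereal_sup [set ereal_inf [set (recourse_cost c C y)%:E
                             | y in Yset A d theta x.2 u]
            | u in U x].

Definition objective (U : (I -> J -> R) * (J -> R) -> set (I -> R))
  (A : J -> R) (d theta : I -> R) (c : I -> J -> R) (C rho : R)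
  (x : (I -> J -> R) * (J -> R)) : \bar R :=
  ((1 - rho) * \sum_(i : I) \sum_(j : J) c i j * x.1 i j)%:E
  + (rho%:E * worst_case U A d theta c C x)%E.

End RFL.

Definition opt_value (R : realType) (T : Type) (F : T -> \bar R) (X : set T)
  : \bar R := ereal_inf (F @` X).

Definition is_optimal (R : realType) (T : Type) (F : T -> \bar R) (X : set T)
  (x : T) : Prop := X x /\ F x = opt_value F X.

Definition equivalent (R : realType) (T : Type) (F G : T -> \bar R)
  (X : set T) : Prop :=
  opt_value F X = opt_value G X /\
  (forall x, is_optimal F X x <-> is_optimal G X x).

(* Main.v *)
Require Import Defs.
From HB Require Import structures.
From mathcomp Require Import all_boot all_order all_algebra.
From mathcomp Require Import all_classical all_reals ereal.
From mathcomp Require Import ring lra.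
Set Implicit Arguments. Unset Strict Implicit. Unset Printing Implicit Defensive.
Import Order.TTheory GRing.Theory Num.Theory.
Local Open Scope classical_set_scope.
Local Open Scope ring_scope.

Lemma sumL (R : realType) (T : finType) (f g : T -> R) (l mu : R) :
  \sum_(i : T) (l * f i + mu * g i) = l * \sum_(i : T) f i + mu * \sum_(i : T) g i.
Proof. by rewrite big_split /= -!mulr_sumr. Qed.

Definition Gp (R : realType) (I J : finType) (emb : J -> I) (A : J -> R)
  (d theta : I -> R) (c : I -> J -> R) (C : R) (xd : J -> R) (m : R)
  (u : I -> R) : Prop :=
  exists y, Yset emb A d theta xd u y /\ recourse_cost c C y < m.

Lemma G_conv (R : realType) (I J : finType) (emb : J -> I) (A : J -> R)
  (d theta : I -> R) (c : I -> J -> R) (C : R) (xd : J -> R) (m : R)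
  (a b u : I -> R) (l : R) :
  (forall i, 0 <= d i) -> (forall j, 0 <= A j) ->
  0 <= l -> l <= 1 -> (forall i, u i = l * a i + (1 - l) * b i) ->
  Gp emb A d theta c C xd m a -> Gp emb A d theta c C xd m b ->
  Gp emb A d theta c C xd m u.
Proof.
move=> d0 A0 l0 l1 hu [ya [[ya1 [ya2 [ya3 [ya4 ya5]]]] yac]]
  [yb [[yb1 [yb2 [yb3 [yb4 yb5]]]] ybc]].
have l0' : 0 <= 1 - l by lra.
exists ((fun i j => l * ya.1 i j + (1 - l) * yb.1 i j),
        (fun i => l * ya.2 i + (1 - l) * yb.2 i)).
split; [split; [|split; [|split; [|split]]]|].
- by move=> i j /=; apply: addr_ge0; apply: mulr_ge0.
- by move=> i /=; apply: addr_ge0; apply: mulr_ge0.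
- move=> i /=; rewrite sumL hu.
  have h1 := ler_wpM2l l0 (ya3 i); have h2 := ler_wpM2l l0' (yb3 i).
  lra.
- move=> j /=; rewrite sumL.
  have h1 := ler_wpM2l l0 (ya4 j); have h2 := ler_wpM2l l0' (yb4 j).
  lra.
- move=> j /=; rewrite sumL hu.
  have h1 := ler_wpM2l l0 (ya5 j); have h2 := ler_wpM2l l0' (yb5 j).
  lra.
- have -> : recourse_cost c C
     ((fun i j => l * ya.1 i j + (1 - l) * yb.1 i j),
      (fun i => l * ya.2 i + (1 - l) * yb.2 i)) =
     l * recourse_cost c C ya + (1 - l) * recourse_cost c C yb.
    rewrite /recourse_cost /=.
    have e1 : \sum_i \sum_j c i j * (l * ya.1 i j + (1 - l) * yb.1 i j) =
      l * (\sum_i \sum_j c i j * ya.1 i j) + (1 - l) * (\sum_i \sum_j c i j * yb.1 i j).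
      rewrite -sumL; apply: eq_bigr => i _; rewrite -sumL.
      by apply: eq_bigr => j _; ring.
    have e2 : \sum_i C * (l * ya.2 i + (1 - l) * yb.2 i) =
      l * (\sum_i C * ya.2 i) + (1 - l) * (\sum_i C * yb.2 i).
      by rewrite -sumL; apply: eq_bigr => i _; ring.
    rewrite e1 e2; ring.
  set p := recourse_cost c C ya in yac *; set q := recourse_cost c C yb in ybc *.
  case: (lerP p q) => h.
  + have : l * (p - q) <= 0 by apply: mulr_ge0_le0 => //; lra.
    lra.
  + have : l * (p - q) <= 1 * (p - q) by apply: ler_wpM2r; lra.
    lra.
Qed.

Lemma G_seg (R : realType) (I J : finType) (emb : J -> I) (A : J -> R)
  (d theta : I -> R) (c : I -> J -> R) (C : R) (xd : J -> R) (m : R)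
  (u delta : I -> R) (t1 t2 : R) :
  (forall i, 0 <= d i) -> (forall j, 0 <= A j) -> 0 < t1 -> 0 < t2 ->
  Gp emb A d theta c C xd m (fun i => u i + t2 * delta i) ->
  Gp emb A d theta c C xd m (fun i => u i - t1 * delta i) ->
  Gp emb A d theta c C xd m u.
Proof.
move=> d0 A0 h1 h2 ga gb.
have hs : t1 + t2 != 0 by rewrite gt_eqF //; lra.
apply: (G_conv (l := t1 / (t1 + t2)) d0 A0 _ _ _ ga gb).
- by apply: divr_ge0; lra.
- rewrite ler_pdivrMr; lra.
- move=> i /=; field; exact: hs.
Qed.

Definition dlt (R : realType) (I J : finType) (emb : J -> I) (a : J) : I -> R :=
  fun i => if i == emb a then 1 else 0.

Definition Frac (R : realType) (I J : finType) (emb : J -> I) (u : I -> R) : {set J} :=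
  [set j | (0 < u (emb j)) && (u (emb j) < 1)].

Lemma dlt_emb (R : realType) (I J : finType) (emb : J -> I) (a j : J) :
  injective emb -> dlt R emb a (emb j) = if j == a then 1 else 0.
Proof. by move=> inj; rewrite /dlt (inj_eq inj). Qed.

Lemma sum_dlt (R : realType) (I J : finType) (emb : J -> I) (a : J) :
  injective emb -> \sum_(j : J) dlt R emb a (emb j) = 1.
Proof.
move=> inj; rewrite (bigD1 a) //= dlt_emb // eqxx big1 ?addr0 // => j hj.
by rewrite dlt_emb // (negbTE hj).
Qed.

Lemma dlt_off (R : realType) (I J : finType) (emb : J -> I) (a : J) (i : I) :
  (forall j, emb j <> i) -> dlt R emb a i = 0.
Proof.
move=> h; rewrite /dlt; case: eqP => // e; by case: (h a); rewrite e.
Qed.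

Lemma sum_split_emb (R : realType) (I J : finType) (emb : J -> I) (u : I -> R) :
  injective emb ->
  \sum_(i : I) u i = \sum_(j : J) u (emb j)
     + \sum_(i | i \notin emb @: [set: J]%SET) u i.
Proof.
move=> inj; rewrite (bigID (mem (emb @: [set: J]%SET))) /=; congr (_ + _).
rewrite big_imset /=; last by move=> x y _ _; apply: inj.
by apply: eq_bigl => j; rewrite ?inE.
Qed.

Lemma notin_img (I J : finType) (emb : J -> I) (i : I) :
  i \notin emb @: [set: J]%SET -> forall j, emb j <> i.
Proof. by move=> h j e; move: h; rewrite -e imset_f ?in_setT. Qed.

Lemma sum_emb_eq (R : realType) (I J : finType) (emb : J -> I) (u : I -> R) :
  injective emb -> (forall i, (forall j, emb j <> i) -> u i = 0) ->
  \sum_(i : I) u i = \sum_(j : J) u (emb j).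
Proof.
move=> inj h; rewrite (@sum_split_emb _ _ _ emb u inj) [X in _ + X]big1 ?addr0 // => i hi.
by apply: h; apply: notin_img.
Qed.

Lemma sum_emb_le (R : realType) (I J : finType) (emb : J -> I) (u : I -> R) :
  injective emb -> (forall i, 0 <= u i) ->
  \sum_(j : J) u (emb j) <= \sum_(i : I) u i.
Proof.
move=> inj h; rewrite (@sum_split_emb _ _ _ emb u inj) lerDl; exact: sumr_ge0.
Qed.

Lemma sum_nat (R : realType) (T : finType) (P : pred T) (f : T -> R) :
  (forall j, P j -> f j = 0 \/ f j = 1) ->
  exists n : nat, \sum_(j | P j) f j = n%:R.
Proof.
move=> h; apply: (big_ind (fun x => exists n : nat, x = n%:R)).
- by exists 0%N.
- by move=> x y [n ->] [n' ->]; exists (n + n')%N; rewrite natrD.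
- by move=> j /h [->|->]; [exists 0%N | exists 1%N].
Qed.

Lemma not_frac01 (R : realType) (x : R) :
  0 <= x -> x <= 1 -> ~~ ((0 < x) && (x < 1)) -> x = 0 \/ x = 1.
Proof.
move=> h0 h1; rewrite negb_and -!leNgt => /orP [h|h]; [left|right]; lra.
Qed.

Lemma Uk_intro (R : realType) (I J : finType) (emb : J -> I) (k : nat)
  (xd : J -> R) (w : I -> R) :
  (forall j, 0 <= w (emb j) /\ w (emb j) <= xd j) ->
  \sum_(j : J) w (emb j) <= k%:R ->
  (forall i, (forall j, emb j <> i) -> w i = 0) ->
  Ukset emb k xd w.
Proof.
move=> h1 h2 h3; split; [|split; [exact: h2|split; [|exact: h3]]].
- move=> i; case: (pselect (exists j, emb j = i)) => [[j <-]|hn].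
  + by case: (h1 j).
  + rewrite h3 // => j e; apply: hn; by exists j.
- by move=> j; case: (h1 j).
Qed.

Lemma G_all (R : realType) (I J : finType) (emb : J -> I) (A : J -> R)
  (d theta : I -> R) (c : I -> J -> R) (C : R) (xd : J -> R) (k : nat) (m : R) :
  injective emb -> (forall i, 0 <= d i) -> (forall j, 0 <= A j) ->
  (forall j, xd j = 0 \/ xd j = 1) ->
  (forall v, Ukset emb k xd v -> Frac emb v = finset.set0 ->
     Gp emb A d theta c C xd m v) ->
  forall n u, (#|Frac emb u| <= n)%N -> Ukset emb k xd u ->
     Gp emb A d theta c C xd m u.
Proof.
move=> inj d0 A0 xd01 base; elim=> [|n IH] u hn hu.
  apply: base => //; apply/eqP; rewrite -cards_eq0 -leqn0; exact: hn.
case: (leqP #|Frac emb u| n) => hn'; first exact: IH.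
have := hu => -[u0 [usum [uxd uoff]]].
have xd1 : forall j, xd j <= 1 by move=> j; case: (xd01 j) => ->; lra.
have ule1 : forall j, u (emb j) <= 1.
  by move=> j; apply: le_trans (uxd j) (xd1 j).
have [a ha] : exists a, a \in Frac emb u.
  by apply/set0Pn; rewrite -card_gt0; exact: leq_ltn_trans (leq0n n) hn'.
move: (ha); rewrite /Frac inE => /andP [ua0 ua1].
have xda : xd a = 1.
  by case: (xd01 a) => // e; have := uxd a; rewrite e; lra.
have frac_lt : forall (w : I -> R) (b : J), b \in Frac emb u ->
   (forall j, j != a -> j != b -> w (emb j) = u (emb j)) ->
   (a \notin Frac emb w) \/ (b \notin Frac emb w) ->
   (#|Frac emb w| <= n)%N.
  move=> w b hb hw hnot; rewrite -ltnS; apply: leq_trans _ hn.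
  apply: proper_card; apply/properP; split.
  - apply/fintype.subsetP => j; case: (eqVneq j a) => [-> _|hja]; first exact: ha.
    case: (eqVneq j b) => [-> _|hjb]; first exact: hb.
    by rewrite /Frac !inE hw.
  - by case: hnot => h; [exists a | exists b].
have IHw : forall w, Ukset emb k xd w -> (#|Frac emb w| <= n)%N ->
    Gp emb A d theta c C xd m w by move=> w h1 h2; exact: IH.
case: (pickP (fun b => (b \in Frac emb u) && (b != a))) =>
    [b /andP [hb hba] | hnone].
- move: (hb); rewrite /Frac inE => /andP [ub0 ub1].
  have hab' : (a == b) = false by rewrite eq_sym (negbTE hba).
  have xdb : xd b = 1.
    by case: (xd01 b) => // e; have := uxd b; rewrite e; lra.
  pose delta := fun i => dlt R emb a i - dlt R emb b i.
  have dE : forall j, delta (emb j) =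
      (if j == a then 1 else 0) - (if j == b then 1 else 0).
    by move=> j; rewrite /delta !dlt_emb.
  have dsum : \sum_j delta (emb j) = 0.
    by rewrite /delta sumrB !sum_dlt // subrr.
  have doff : forall i, (forall j, emb j <> i) -> delta i = 0.
    by move=> i h; rewrite /delta !dlt_off // subrr.
  have wUk : forall t, (forall j, 0 <= u (emb j) + t * delta (emb j) /\
                         u (emb j) + t * delta (emb j) <= xd j) ->
      Ukset emb k xd (fun i => u i + t * delta i).
    move=> t h; apply: Uk_intro => //=.
    - by rewrite big_split /= -mulr_sumr dsum mulr0 addr0.
    - by move=> i hi; rewrite doff // uoff // mulr0 addr0.
  have [t2 [t2p [t2a [t2b t2e]]]] : exists t2, 0 < t2 /\ t2 <= 1 - u (emb a)
      /\ t2 <= u (emb b) /\ (t2 = 1 - u (emb a) \/ t2 = u (emb b)).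
    case: (lerP (1 - u (emb a)) (u (emb b))) => h;
      [exists (1 - u (emb a)) | exists (u (emb b))].
    + by split; [lra|split; [lra|split; [lra|left]]].
    + by split; [lra|split; [lra|split; [lra|right]]].
  have [t1 [t1p [t1a [t1b t1e]]]] : exists t1, 0 < t1 /\ t1 <= u (emb a)
      /\ t1 <= 1 - u (emb b) /\ (t1 = u (emb a) \/ t1 = 1 - u (emb b)).
    case: (lerP (u (emb a)) (1 - u (emb b))) => h;
      [exists (u (emb a)) | exists (1 - u (emb b))].
    + by split; [lra|split; [lra|split; [lra|left]]].
    + by split; [lra|split; [lra|split; [lra|right]]].
  have ub_le := uxd b.
  apply: (G_seg (delta := delta) d0 A0 t1p t2p); apply: IHw.
  + apply: wUk => j; rewrite dE; case: (eqVneq j a) => [->|hja].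
      by rewrite ?eqxx hab' xda; split; lra.
    rewrite ?(negbTE hja); case: (eqVneq j b) => [->|hjb].
      by rewrite ?eqxx ?xdb; split; lra.
    by rewrite ?(negbTE hjb) subrr mulr0 addr0; split; [apply: u0|apply: uxd].
  + apply: (frac_lt _ b hb).
      by move=> j hja hjb; rewrite /= dE (negbTE hja) (negbTE hjb) subrr mulr0 addr0.
    case: t2e => e; [left|right]; rewrite /Frac inE /= dE ?eqxx ?hab' ?(negbTE hba) ?eqxx;
      rewrite negb_and; apply/orP; [right|left]; rewrite -leNgt; lra.
  + have -> : (fun i => u i - t1 * delta i) = (fun i => u i + (- t1) * delta i).
      by apply: funext => i; rewrite mulNr.
    apply: wUk => j; rewrite dE; case: (eqVneq j a) => [->|hja].
      by rewrite ?eqxx hab' xda; split; lra.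
    rewrite ?(negbTE hja); case: (eqVneq j b) => [->|hjb].
      by rewrite ?eqxx ?xdb; split; lra.
    by rewrite ?(negbTE hjb) subrr mulr0 addr0; split; [apply: u0|apply: uxd].
  + apply: (frac_lt _ b hb).
      by move=> j hja hjb; rewrite /= dE (negbTE hja) (negbTE hjb) subrr mulr0 subr0.
    case: t1e => e; [left|right]; rewrite /Frac inE /= dE ?eqxx ?hab' ?(negbTE hba) ?eqxx;
      rewrite negb_and; apply/orP; [left|right]; rewrite -?leNgt; lra.
- have only : forall j, j != a -> u (emb j) = 0 \/ u (emb j) = 1.
    move=> j hja; apply: not_frac01; [exact: u0 | exact: ule1 |].
    have := hnone j; rewrite hja andbT /Frac inE => h; by rewrite h.
  have [n0 hn0] := sum_nat only.
  have hsum : \sum_j u (emb j) = u (emb a) + n0%:R by rewrite (bigD1 a) //= hn0.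
  have hk : n0%:R + 1 <= k%:R :> R.
    have h : (n0%:R < k%:R :> R) by lra.
    by move: h; rewrite ltr_nat => h; rewrite natr1 ler_nat.
  pose delta := dlt R emb a.
  have t2p : 0 < 1 - u (emb a) by lra.
  apply: (G_seg (delta := delta) d0 A0 ua0 t2p); apply: IHw.
  + apply: Uk_intro => /=.
    * move=> j; rewrite /delta dlt_emb //; case: (eqVneq j a) => [->|hja].
        by rewrite xda; split; lra.
      by rewrite mulr0 addr0; split; [apply: u0|apply: uxd].
    * by rewrite big_split /= -mulr_sumr sum_dlt // mulr1 hsum; lra.
    * by move=> i hi; rewrite /delta dlt_off // uoff // mulr0 addr0.
  + apply: (frac_lt _ a ha).
      by move=> j hja _; rewrite /= /delta dlt_emb // (negbTE hja) mulr0 addr0.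
    left; rewrite /Frac inE /= /delta dlt_emb // eqxx.
    rewrite negb_and; apply/orP; right; rewrite -leNgt; lra.
  + apply: Uk_intro => /=.
    * move=> j; rewrite /delta dlt_emb //; case: (eqVneq j a) => [->|hja].
        by split; lra.
      by rewrite mulr0 subr0; split; [apply: u0|apply: uxd].
    * by rewrite sumrB -mulr_sumr sum_dlt // mulr1; lra.
    * by move=> i hi; rewrite /delta dlt_off // uoff // mulr0 subr0.
  + apply: (frac_lt _ a ha).
      by move=> j hja _; rewrite /= /delta dlt_emb // (negbTE hja) mulr0 subr0.
    left; rewrite /Frac inE /= /delta dlt_emb // eqxx.
    rewrite negb_and; apply/orP; left; rewrite -leNgt; lra.
Qed.

Lemma ereal_le_of_lt (R : realType) (x M : \bar R) :
  (forall m : R, (M < m%:E)%E -> (x < m%:E)%E) -> (x <= M)%E.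
Proof.
case: M => [r| |] h.
- case: x h => [s| |] h.
  + rewrite lee_fin leNgt; apply/negP => hrs.
    have := h ((r + s) / 2); rewrite !lte_fin => h'.
    have : s < (r + s) / 2 by apply: h'; lra.
    lra.
  + have := h (r + 1); rewrite lte_fin => h'.
    have := h' ltac:(lra); by rewrite ltNge leey.
  + exact: leNye.
- exact: leey.
- case: x h => [s| |] h.
  + by have := h s (ltNyr s); rewrite ltxx.
  + by have := h 0 (ltNyr 0); rewrite ltNge leey.
  + by [].
Qed.

Lemma wc_eq (R : realType) (I J : finType) (emb : J -> I) (A : J -> R)
  (d theta : I -> R) (c : I -> J -> R) (C : R) (k : nat)
  (x : (I -> J -> R) * (J -> R)) :
  injective emb -> (forall i, 0 <= d i) -> (forall j, 0 <= A j) ->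
  (forall i, theta i <= 0) -> (forall j, x.2 j = 0 \/ x.2 j = 1) ->
  worst_case emb (fun _ => @U0set R I k) A d theta c C x =
  worst_case emb (fun x => Ukset emb k x.2) A d theta c C x.
Proof.
move=> inj d0 A0 th0 x01.
have xd1 : forall j, x.2 j <= 1 by move=> j; case: (x01 j) => ->; lra.
have xd0 : forall j, 0 <= x.2 j by move=> j; case: (x01 j) => ->; lra.
rewrite /worst_case; apply/eqP; rewrite eq_le; apply/andP; split.
- apply/ereal_supP => _ [u [u01 usum] <-].
  have u0 : forall i, 0 <= u i by move=> i; case: (u01 i) => ->; lra.
  have u1 : forall i, u i <= 1 by move=> i; case: (u01 i) => ->; lra.
  pose cnd := fun i => [exists j, (emb j == i) && (x.2 j == 1)].
  have cndE : forall j, cnd (emb j) = (x.2 j == 1).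
    move=> j; apply/existsP/idP => [[j' /andP [/eqP e h]]|h].
      by rewrite -(inj _ _ e).
    by exists j; rewrite eqxx h.
  pose u' := fun i => if cnd i then u i else 0.
  have u'le : forall i, u' i <= u i by move=> i; rewrite /u'; case: ifP.
  apply: le_ereal_sup_tmp.
  exists (ereal_inf [set (recourse_cost c C y)%:E | y in Yset emb A d theta x.2 u']).
    exists u' => //; apply: Uk_intro.
    + move=> j; rewrite /u' cndE; case: eqP => [->|_]; first by split.
      by split; [|apply: xd0].
    + apply: le_trans (usum); apply: le_trans (sum_emb_le inj u0).
      by apply: ler_sum => j _.
    + move=> i hi; rewrite /u' /cnd; case: existsP => // -[j /andP [/eqP e _]].
      by case: (hi j).
  apply: ereal_inf_le_tmp => _ [y [y1 [y2 [y3 [y4 y5]]]] <-]; exists y => //.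
  split; [exact: y1|split; [exact: y2|split; [|split; [exact: y4|]]]].
  + move=> i; apply: le_trans (y3 i); rewrite /u'; case: ifP => // _.
    have h1 : theta i * u i <= 0 by apply: mulr_le0_ge0.
    have h2 : theta i * u i * d i <= 0 by apply: mulr_le0_ge0.
    rewrite mulr0 addr0 mul1r; lra.
  + move=> j; have := y5 j; rewrite /u' cndE; case: eqP => [_ //|hne _].
    apply: le_trans (y4 j) _; case: (x01 j) => // ->.
    by rewrite mulr0; apply: mulr_ge0 => //; rewrite subr_ge0.
- apply/ereal_supP => _ [u hu <-].
  apply: ereal_le_of_lt => m hM.
  have base : forall v, Ukset emb k x.2 v -> Frac emb v = finset.set0 ->
      Gp emb A d theta c C x.2 m v.
    move=> v hv F0; have := hv => -[v0 [vsum [vxd voff]]].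
    have hU0 : @U0set R I k v.
      split.
      - move=> i; case: (pselect (exists j, emb j = i)) => [[j <-]|hn].
          apply: not_frac01; [exact: v0|exact: le_trans (vxd j) (xd1 j)|].
          have : j \in Frac emb v = false by rewrite F0 finset.in_set0.
          by rewrite /Frac inE => ->.
        by left; apply: voff => j e; apply: hn; exists j.
      - by rewrite (sum_emb_eq inj voff).
    have : (ereal_inf [set (recourse_cost c C y)%:E
             | y in Yset emb A d theta x.2 v] < m%:E)%E.
      apply: le_lt_trans hM; apply: le_ereal_sup_tmp; eexists; last exact: lexx.
      by exists v.
    move/ereal_inf_lt => [_ [y hy <-]]; rewrite lte_fin => hc.
    by exists y.
  have [y [hy hc]] := G_all inj d0 A0 x01 base (leqnn _) hu.
  apply: le_lt_trans (_ : _ <= (recourse_cost c C y)%:E)%E _; last by rewrite lte_fin.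
  by apply: ge_ereal_inf; exists (recourse_cost c C y)%:E => //; exists y.
Qed.

Theorem corollary13 (R : realType) (I J : finType) (emb : J -> I)
  (d : I -> R) (c : I -> J -> R) (A : J -> R) (p k : nat)
  (rho C : R) (theta : I -> R) :
  injective emb ->
  (forall i, 0 <= d i) ->
  (forall i j, 0 <= c i j) ->
  (forall j, c (emb j) j = 0) ->
  (forall j, 0 <= A j) ->
  (0 < p)%N -> (0 < k)%N ->
  0 <= rho -> rho <= 1 ->
  (forall i j, c i j <= C) ->
  (forall i, theta i <= 0) ->
  equivalent
    (objective emb (fun _ => @U0set R I k) A d theta c C rho)
    (objective emb (fun x => Ukset emb k x.2) A d theta c C rho)
    (Xset A d p).
Proof.
move=> inj d0 c0 ce0 A0 p0 k0 r0 r1 cC th0.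
have key : forall x, Xset A d p x ->
    objective emb (fun _ => @U0set R I k) A d theta c C rho x =
    objective emb (fun x => Ukset emb k x.2) A d theta c C rho x.
  by move=> x [_ [x01 _]]; rewrite /objective wc_eq.
have img : (objective emb (fun _ => @U0set R I k) A d theta c C rho) @` (Xset A d p) =
           (objective emb (fun x => Ukset emb k x.2) A d theta c C rho) @` (Xset A d p).
  by apply/seteqP; split => _ [x hx <-]; exists x => //; rewrite (key x hx).
split; first by rewrite /opt_value img.
move=> x; rewrite /is_optimal /opt_value img.
by split=> -[hx e]; split=> //; [rewrite -(key x hx) | rewrite (key x hx)].
Qed.
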